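(* Let $m\ge1$ and $n_1,\dots,n_m\ge2$ be integers, $\mathcal D=\mathcal D_1\times\cdots\times\mathcal D_m$ the full factorial design where $\mathcal D_j$ is the set of $n_j$-th roots of unity, ordered lexicographically, and $L=\mathbb Z_{n_1}\times\cdots\times\mathbb Z_{n_m}$. Let $\mathcal F$ be a nonempty fraction (multiset of points of $\mathcal D$) with counting function $R=\sum_{\alpha\in L}c_\alpha X^\alpha$, where $X^\alpha(\zeta)=\zeta_1^{\alpha_1}\cdots\zeta_m^{\alpha_m}$, and let $\#\mathcal F=\sum_{\zeta\in\mathcal D}R(\zeta)$. Define the generalized wordlength pattern $(\alpha_1(\mathcal F),\dots,\alpha_m(\mathcal F))$ by \[ \alpha_i(\mathcal F)=\sum_{\alpha\in L,\ \|\alpha\|_0=i}\left(\frac{\|c_\alpha\|_2}{\|c_0\|_2}\right)^2,\quad i=1,\dots,m, \] where $\|\alpha\|_0$ is the number of nonzero components of $\alpha$ and $\|\cdot\|_2$ is the complex modulus. Let $Y=[R(\zeta):\zeta\in\mathcal D]$, and for $\alpha\in L$ let $H^\alpha_R$ be the real part (entrywise) of $\overline{X^\alpha}(X^\alpha)^T$, where $X^\alpha$ is the column vector $[X^\alpha(\zeta):\zeta\in\mathcal D]$. Then \[ \alpha_i(\mathcal F)=\frac{1}{(\#\mathcal F)^2}\,Y^T H_i Y,\qquad i=1,\dots,m, \] where $H_i=\sum_{\alpha\in L,\ \|\alpha\|_0=i}H_R^\alpha$.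
   Context: The counting function $R$ gives, for each $\zeta\in\mathcal D$, the number of times $\zeta$ appears in $\mathcal F$; the monomials $X^\alpha$, $\alpha\in L$, form a basis of complex functions on $\mathcal D$, so the $c_\alpha$ are unique. $c_0$ denotes the coefficient for $\alpha=(0,\dots,0)$. *)

(* Defs.v *)
From HB Require Import structures.
From mathcomp Require Import all_boot all_order all_algebra all_field.
Set Implicit Arguments. Unset Strict Implicit. Unset Printing Implicit Defensive.
Import Order.TTheory GRing.Theory Num.Theory.
Local Open Scope ring_scope.

(* Exponent index set L = Z_{n_1} x ... x Z_{n_m}; also used to index the
   design points: the point with index k is (omega_1^{k_1},...,omega_m^{k_m}). *)
Definition Lset (m : nat) (n : 'I_m -> nat) : finType :=
  {dffun forall j : 'I_m, 'I_(n j)}.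

Definition point (m : nat) (n : 'I_m -> nat) (omega : 'I_m -> algC)
  (k : Lset n) : 'I_m -> algC := fun j => omega j ^+ (k j).

Definition monom (m : nat) (n : 'I_m -> nat) (alpha : Lset n)
  (zeta : 'I_m -> algC) : algC := \prod_(j < m) zeta j ^+ (alpha j).

Definition norm0 (m : nat) (n : 'I_m -> nat) (alpha : Lset n) : nat :=
  #|[set j : 'I_m | (alpha j != 0%N :> nat)]|.

(* c_0 : the coefficient at alpha = (0,...,0) (the unique alpha with norm0 = 0) *)
Definition c0 (m : nat) (n : 'I_m -> nat) (c : Lset n -> algC) : algC :=
  \sum_(alpha : Lset n | norm0 alpha == 0%N) c alpha.

Definition cardF (m : nat) (n : 'I_m -> nat) (R : Lset n -> nat) : nat :=
  \sum_(k : Lset n) R k.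

Definition gwlp (m : nat) (n : 'I_m -> nat) (c : Lset n -> algC) (i : nat) : algC :=
  \sum_(alpha : Lset n | norm0 alpha == i) (`|c alpha| / `|c0 c|) ^+ 2.

Definition HR (m : nat) (n : 'I_m -> nat) (omega : 'I_m -> algC)
  (alpha : Lset n) (k k' : Lset n) : algC :=
  'Re ((monom alpha (point omega k))^* * monom alpha (point omega k')).

Definition Hi (m : nat) (n : 'I_m -> nat) (omega : 'I_m -> algC) (i : nat)
  (k k' : Lset n) : algC :=
  \sum_(alpha : Lset n | norm0 alpha == i) HR omega alpha k k'.

Definition quadform (m : nat) (n : 'I_m -> nat) (R : Lset n -> nat)
  (M : Lset n -> Lset n -> algC) : algC :=
  \sum_(k : Lset n) \sum_(k' : Lset n) (R k)%:R * M k k' * (R k')%:R.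

(* Main.v *)
Require Import Defs.
From HB Require Import structures.
From mathcomp Require Import all_boot all_order all_algebra all_field.
From mathcomp Require Import ring.
Import Order.TTheory GRing.Theory Num.Theory.
Local Open Scope ring_scope.

Section S.
Variables (m : nat) (n : 'I_m -> nat) (omega : 'I_m -> algC).
Hypothesis prim : forall j, (n j).-primitive_root (omega j).

Local Notation X a k := (monom a (point omega k)).

Lemma norm_omega j : `|omega j| = 1.
Proof.
have h := prim_expr_order (prim j).
have /eqP := congr1 (fun x => `|x|) h; rewrite normrX normr1.
by rewrite pexpr_eq1 ?(prim_order_gt0 (prim j)) // => /eqP.
Qed.

Lemma normX (a k : Lset n) : `|X a k| = 1.
Proof.
rewrite /monom normr_prod; apply: big1 => j _.
by rewrite /point !normrX norm_omega !expr1n.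
Qed.

Lemma conjXX (a k : Lset n) : (X a k)^* * X a k = 1.
Proof. by rewrite -normCKC normX expr1n. Qed.

Definition sh (j0 : 'I_m) (k : Lset n) : Lset n :=
  finfun (fun j => (if j == j0 then @ordS (n j) else id) (k j)).

Lemma sh_inj j0 : injective (sh j0).
Proof.
move=> k1 k2 /ffunP E; apply/ffunP => j; have := E j; rewrite !ffunE.
by case: eqP => _ /=; [exact: ordS_inj | done].
Qed.

Lemma X_sh (a k : Lset n) j0 : X a (sh j0 k) = omega j0 ^+ a j0 * X a k.
Proof.
rewrite /monom (bigD1 j0) //= [in RHS](bigD1 j0) //= mulrA; congr (_ * _).
  rewrite /point ffunE eqxx /= prim_expr_mod // exprS exprMn; congr (_ * _).
apply: eq_bigr => j /negbTE hj; by rewrite /point ffunE hj.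
Qed.

Lemma conj_om (j : 'I_m) e : (omega j ^+ e)^* = (omega j ^+ e)^-1.
Proof. by rewrite invC_norm normrX norm_omega expr1n expr1n invr1 mul1r. Qed.

Lemma orth (a b : Lset n) :
  \sum_(k : Lset n) (X a k)^* * X b k = (a == b)%:R * #|Lset n|%:R.
Proof.
case: (eqVneq a b) => [<-|nab].
  by rewrite mul1r (eq_bigr (fun _ => 1)) ?sumr_const // => k _; rewrite conjXX.
rewrite mul0r.
have [j0 hj0] : exists j0, a j0 != b j0.
  apply/existsP; apply: contraR nab => /existsPn H; apply/eqP/ffunP => j.
  by have := H j; rewrite negbK => /eqP.
set S := \sum_k _.
set u := (omega j0 ^+ a j0)^* * omega j0 ^+ b j0.
have hS : S = u * S.
  rewrite {1}/S (reindex_inj (sh_inj j0)) /= /S mulr_sumr; apply: eq_bigr => k _.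
  by rewrite !X_sh rmorphM /u mulrACA.
have hu : u != 1.
  rewrite /u conj_om mulrC; apply/negP => /eqP h.
  have hne : omega j0 ^+ a j0 != 0.
    by rewrite -normr_eq0 normrX norm_omega expr1n oner_eq0.
  have : omega j0 ^+ b j0 = omega j0 ^+ a j0.
    by apply: (mulIf (invr_neq0 hne)); rewrite h divff.
  move/eqP; rewrite (eq_prim_root_expr (prim j0)) !modn_small ?ltn_ord //.
  by move=> /eqP /val_inj E; move: hj0; rewrite E eqxx.
apply/eqP; have : (1 - u) * S == 0 by rewrite mulrBl mul1r -hS subrr.
by rewrite mulf_eq0 subr_eq0 eq_sym (negbTE hu).
Qed.

Variables (R : Lset n -> nat) (c : Lset n -> algC).
Hypothesis hR : forall k : Lset n,
  (R k)%:R = \sum_(alpha : Lset n) c alpha * monom alpha (point omega k).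

Local Notation N := (#|Lset n|%:R : algC).

Lemma coef (a : Lset n) : c a * N = \sum_(k : Lset n) (R k)%:R * (X a k)^*.
Proof.
symmetry.
under eq_bigr => k _ do rewrite hR mulr_suml.
rewrite exchange_big /=.
transitivity (\sum_(b : Lset n) c b * ((a == b)%:R * N)).
  apply: eq_bigr => b _; rewrite -(orth a b) mulr_sumr; apply: eq_bigr => k _.
  by rewrite -mulrA (mulrC (X b k)).
rewrite (bigD1 a) //= eqxx mul1r big1 ?addr0 // => b /negbTE.
by rewrite eq_sym => ->; rewrite mul0r mulr0.
Qed.

Definition W (a : Lset n) := quadform R (fun k k' => (X a k)^* * X a k').

Lemma Npos : N != 0.
Proof.
rewrite pnatr_eq0 -lt0n; apply/card_gt0P.
by exists (finfun (fun j => Ordinal (prim_order_gt0 (prim j)))).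
Qed.

Lemma normc (a : Lset n) : `|c a| ^+ 2 = N^-2 * W a.
Proof.
have hc : c a = N^-1 * \sum_(k : Lset n) (R k)%:R * (X a k)^*.
  by rewrite -coef mulrC mulrK // unitfE Npos.
rewrite normCK hc rmorphM fmorphV rmorph_nat rmorph_sum.
rewrite mulrACA -expr2 exprVn; congr (_ * _).
rewrite /W /quadform mulr_suml; apply: eq_bigr => k _.
rewrite mulr_sumr; apply: eq_bigr => k' _.
by rewrite rmorphM /= rmorph_nat conjCK; ring.
Qed.

Lemma HRW (a : Lset n) : quadform R (HR omega a) = W a.
Proof.
have E : forall x y z : algC, x * 'Re y * z = (x * y * z + x * y^* * z) / 2.
  by move=> x y z; rewrite ReE; ring.
rewrite /quadform /HR.
under eq_bigr => k _ do under eq_bigr => k' _ do rewrite E.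
under eq_bigr => k _ do rewrite -mulr_suml big_split /=.
rewrite -mulr_suml big_split /=.
have -> : \sum_(k : Lset n) \sum_(k' : Lset n) (R k)%:R * ((X a k)^* * X a k')^* * (R k')%:R = W a.
  rewrite /W /quadform exchange_big /=; apply: eq_bigr => k _; apply: eq_bigr => k' _.
  by rewrite rmorphM /= conjCK; ring.
by rewrite [Z in (Z + _) / 2](_ : _ = W a) //; field.
Qed.


Definition a0 : Lset n := finfun (fun j => Ordinal (prim_order_gt0 (prim j))).

Lemma norm0_eq0 (a : Lset n) : (norm0 a == 0%N) = (a == a0).
Proof.
rewrite /norm0 cards_eq0; apply/eqP/eqP => [H|->].
  apply/ffunP => j; rewrite ffunE; apply/val_inj => /=.
  move/setP/(_ j): H; rewrite inE in_set0.
  by move/negbFE/eqP.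
by apply/setP => j; rewrite !inE ffunE.
Qed.

Lemma X0 (k : Lset n) : X a0 k = 1.
Proof. by rewrite /monom big1 // => j _; rewrite ffunE expr0. Qed.

Lemma c0E : c0 c * N = (cardF R)%:R.
Proof.
rewrite /c0 (big_pred1 a0); last by move=> a; rewrite /= norm0_eq0.
rewrite coef /cardF natr_sum; apply: eq_bigr => k _.
by rewrite X0 rmorph1 mulr1.
Qed.

End S.

Theorem proposition6 (m : nat) (n : 'I_m -> nat) (omega : 'I_m -> algC)
  (R : Lset n -> nat) (c : Lset n -> algC) :
  (0 < m)%N ->
  (forall j, (2 <= n j)%N) ->
  (forall j, (n j).-primitive_root (omega j)) ->
  (0 < cardF R)%N ->
  (forall k : Lset n,
     (R k)%:R = \sum_(alpha : Lset n) c alpha * monom alpha (point omega k)) ->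
  forall i : nat, (1 <= i <= m)%N ->
    gwlp c i = ((cardF R)%:R ^+ 2)^-1 * quadform R (Hi omega i).
Proof.
move=> _ _ prim Fpos hR i _.
have NP := @Npos _ _ _ prim.
have FP : (cardF R)%:R != 0 :> algC by rewrite pnatr_eq0 -lt0n.
have hc0 : `|c0 c| = (cardF R)%:R / #|Lset n|%:R.
  rewrite -(@c0E _ _ _ prim _ _ hR) mulfK // ger0_norm // -(mulfK NP (c0 c)) (@c0E _ _ _ prim _ _ hR).
  by rewrite divr_ge0 ?ler0n.
have -> : quadform R (Hi omega i) =
    \sum_(a : Lset n | norm0 a == i) quadform R (HR omega a).
  rewrite /quadform /Hi.
  under eq_bigr => k _ do under eq_bigr => k' _ do rewrite mulr_sumr mulr_suml.
  under eq_bigr => k _ do rewrite exchange_big /=.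
  by rewrite exchange_big.
rewrite /gwlp mulr_sumr; apply: eq_bigr => a _.
rewrite HRW expr_div_n (@normc _ _ _ prim _ _ hR) hc0; field.
by rewrite NP FP.
Qed.
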